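(* Let $\rho_b,\rho_f\in(0,1)$ and $\mu=\frac{(1-\rho_b)(1-\rho_f)}{1-\rho_b\rho_f}$. Let $(x_i)_{i\in\mathbb Z}$ be real numbers with $|x_i|<M$ for all $i$, for some constant $M<\infty$. Define $y_i(k)$ for all $i\in\mathbb Z$, $k\ge0$ by $y_i(0)=\mu x_i$; $y_i(1)=y_i(0)+\rho_b y_{i-1}(0)+\rho_f y_{i+1}(0)$; $y_i(2)=y_i(1)+\rho_b(y_{i-1}(1)-y_{i-1}(0))+\rho_f(y_{i+1}(1)-y_{i+1}(0))-2\rho_b\rho_f y_i(0)$; and for $k\ge2$, $y_i(k+1)=y_i(k)+\rho_b(y_{i-1}(k)-y_{i-1}(k-1))+\rho_f(y_{i+1}(k)-y_{i+1}(k-1))-\rho_b\rho_f(y_i(k-1)-y_i(k-2))$. Then for every $i$, $$\lim_{k\to\infty}y_i(k)=\frac{(1-\rho_b)(1-\rho_f)}{1-\rho_b\rho_f}\Big(x_i+\sum_{j=1}^\infty(\rho_b^j x_{i-j}+\rho_f^j x_{i+j})\Big).$$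
   Context: Sensors indexed by $i\in\mathbb Z$ on a line, each with a time-invariant measurement $x_i$ and consensus variable $y_i(k)$, $k=0,1,2,\dots$; communication only with immediate neighbors $i\pm1$. *)

(* Defs.v *)
From Stdlib Require Import Reals ZArith.
Open Scope R_scope.

(* The consensus iteration. [cstep rb rf mu x k] returns the triple
   (y(k), y(k-1), y(k-2)) of functions Z -> R (garbage in unused slots
   for k < 2). *)
Fixpoint ytriple (rb rf mu : R) (x : Z -> R) (k : nat)
  : (Z -> R) * (Z -> R) * (Z -> R) :=
  match k with
  | O => (fun i => mu * x i, fun _ => 0, fun _ => 0)
  | S k' =>
    let '(a, b, c) := ytriple rb rf mu x k' in
    match k' with
    | O => (fun i => a i + rb * a (i - 1)%Z + rf * a (i + 1)%Z, a, b)
    | S O => (fun i => a i + rb * (a (i - 1)%Z - b (i - 1)%Z)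
                        + rf * (a (i + 1)%Z - b (i + 1)%Z) - 2 * rb * rf * b i, a, b)
    | _ => (fun i => a i + rb * (a (i - 1)%Z - b (i - 1)%Z)
                     + rf * (a (i + 1)%Z - b (i + 1)%Z) - rb * rf * (b i - c i), a, b)
    end
  end.

Definition mu_of (rb rf : R) : R := (1 - rb) * (1 - rf) / (1 - rb * rf).

Definition y (rb rf : R) (x : Z -> R) (i : Z) (k : nat) : R :=
  let '(a, _, _) := ytriple rb rf (mu_of rb rf) x k in a i.

(* Main.v *)
Require Import Defs.
From Stdlib Require Import Reals ZArith Lra Lia.
From Coquelicot Require Import Coquelicot.
Open Scope R_scope.

Definition term (rb rf : R) (x : Z -> R) (i : Z) (n : nat) : R :=
  rb ^ (S n) * x (i - Z.of_nat (S n))%Z + rf ^ (S n) * x (i + Z.of_nat (S n))%Z.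

Fixpoint Ysum rb rf x i k : R :=
  match k with O => 0 | S k' => Ysum rb rf x i k' + term rb rf x i k' end.

Definition Y rb rf x k i := mu_of rb rf * (x i + Ysum rb rf x i k).

Lemma term_base rb rf x i :
  term rb rf x i 1 = rb * term rb rf x (i-1)%Z 0 + rf * term rb rf x (i+1)%Z 0
                     - 2 * rb * rf * x i.
Proof.
  unfold term.
  replace (i - Z.of_nat 2)%Z with (i - 1 - Z.of_nat 1)%Z by lia.
  replace (i + Z.of_nat 2)%Z with (i + 1 + Z.of_nat 1)%Z by lia.
  replace (i - 1 + Z.of_nat 1)%Z with i by lia.
  replace (i + 1 - Z.of_nat 1)%Z with i by lia.
  simpl pow. ring.
Qed.

Lemma term_step rb rf x i m :
  term rb rf x i (S (S m)) = rb * term rb rf x (i-1)%Z (S m)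
     + rf * term rb rf x (i+1)%Z (S m) - rb * rf * term rb rf x i m.
Proof.
  unfold term.
  replace (i - Z.of_nat (S (S (S m))))%Z with (i - 1 - Z.of_nat (S (S m)))%Z by lia.
  replace (i + Z.of_nat (S (S (S m))))%Z with (i + 1 + Z.of_nat (S (S m)))%Z by lia.
  replace (i - 1 + Z.of_nat (S (S m)))%Z with (i + Z.of_nat (S m))%Z by lia.
  replace (i + 1 - Z.of_nat (S (S m)))%Z with (i - Z.of_nat (S m))%Z by lia.
  simpl pow. ring.
Qed.

Lemma ytriple_SSS rb rf mu x m :
  ytriple rb rf mu x (S (S (S m))) =
  let '(a, b, c) := ytriple rb rf mu x (S (S m)) in
  (fun i => a i + rb * (a (i - 1)%Z - b (i - 1)%Z)
                     + rf * (a (i + 1)%Z - b (i + 1)%Z) - rb * rf * (b i - c i), a, b).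
Proof. reflexivity. Qed.

Lemma trip rb rf x m :
  let '(a, b, c) := ytriple rb rf (mu_of rb rf) x (S (S m)) in
  forall i, a i = Y rb rf x (S (S m)) i /\ b i = Y rb rf x (S m) i /\ c i = Y rb rf x m i.
Proof.
  induction m.
  - simpl. intros i. unfold Y. simpl Ysum. rewrite term_base.
    unfold term. simpl pow. replace (Z.of_nat 1) with 1%Z by reflexivity.
    split; [|split]; ring.
  - rewrite ytriple_SSS. destruct (ytriple rb rf (mu_of rb rf) x (S (S m))) as [[a b] c].
    intros i. destruct (IHm i) as [Ha [Hb Hc]].
    destruct (IHm (i-1)%Z) as [Ha1 [Hb1 _]].
    destruct (IHm (i+1)%Z) as [Ha2 [Hb2 _]].
    split; [|split]; auto.
    rewrite Ha, Hb, Hc, Ha1, Hb1, Ha2, Hb2. unfold Y. cbn [Ysum].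
    rewrite term_step. ring.
Qed.

Lemma yform rb rf x i k : y rb rf x i k = Y rb rf x k i.
Proof.
  destruct k as [|[|k]].
  - unfold y, Y. simpl. ring.
  - unfold y, Y. simpl. unfold term. simpl pow.
    replace (Z.of_nat 1) with 1%Z by reflexivity. ring.
  - unfold y. pose proof (trip rb rf x k) as H.
    destruct (ytriple rb rf (mu_of rb rf) x (S (S k))) as [[a b] c].
    apply H.
Qed.

Lemma Ysum_sum rb rf x i k : Ysum rb rf x i (S k) = sum_f_R0 (term rb rf x i) k.
Proof. induction k; simpl in *. ring. rewrite IHk. ring. Qed.

Lemma term_ex rb rf M x i : 0 < rb < 1 -> 0 < rf < 1 ->
  (forall i : Z, Rabs (x i) < M) -> ex_series (term rb rf x i).
Proof.
  intros Hb Hf HM.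
  apply (@ex_series_le R_AbsRing R_CompleteNormedModule _ (fun n => M * rb * rb ^ n + M * rf * rf ^ n)).
  - intros n. change norm with Rabs. simpl. unfold term.
    eapply Rle_trans. apply Rabs_triang.
    rewrite !Rabs_mult, <- !RPow_abs, (Rabs_pos_eq rb), (Rabs_pos_eq rf) by lra.
    simpl pow.
    pose proof (HM (i - Z.of_nat (S n))%Z). pose proof (HM (i + Z.of_nat (S n))%Z).
    assert (0 < rb ^ n) by (apply pow_lt; lra).
    assert (0 < rf ^ n) by (apply pow_lt; lra).
    apply Rplus_le_compat.
    + assert (0 < rb * rb ^ n) by nra. nra.
    + assert (0 < rf * rf ^ n) by nra. nra.
  - apply (@ex_series_plus R_AbsRing R_NormedModule (fun n => M * rb * rb ^ n) (fun n => M * rf * rf ^ n)).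
    + apply (@ex_series_scal R_AbsRing R_NormedModule (M*rb) (fun n => rb ^ n)).
      apply ex_series_geom; rewrite Rabs_pos_eq; lra.
    + apply (@ex_series_scal R_AbsRing R_NormedModule (M*rf) (fun n => rf ^ n)).
      apply ex_series_geom; rewrite Rabs_pos_eq; lra.
Qed.

Theorem mainTheorem2 (rb rf M : R) (x : Z -> R) :
  0 < rb < 1 -> 0 < rf < 1 ->
  (forall i : Z, Rabs (x i) < M) ->
  forall i : Z,
  exists s : R,
    infinite_sum
      (fun n : nat => rb ^ (S n) * x (i - Z.of_nat (S n))%Z
                      + rf ^ (S n) * x (i + Z.of_nat (S n))%Z) s /\
    Un_cv (fun k : nat => y rb rf x i k)
      ((1 - rb) * (1 - rf) / (1 - rb * rf) * (x i + s)).
Proof.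
  intros Hb Hf HM i.
  destruct (term_ex rb rf M x i Hb Hf HM) as [s Hs].
  apply is_series_Reals in Hs.
  exists s. split; [exact Hs|].
  change ((1 - rb) * (1 - rf) / (1 - rb * rf)) with (mu_of rb rf).
  apply (Un_cv_ext (fun k => mu_of rb rf * (x i + Ysum rb rf x i k))).
  { intros k. rewrite yform. reflexivity. }
  apply CV_mult. { intros e He. exists O. intros. unfold Rdist. rewrite Rminus_diag, Rabs_R0. lra. }
  apply CV_plus. { intros e He. exists O. intros. unfold Rdist. rewrite Rminus_diag, Rabs_R0. lra. }
  intros e He. destruct (Hs e He) as [N HN]. exists (S N). intros n Hn.
  destruct n as [|n]. lia. rewrite Ysum_sum. apply HN. lia.
Qed.
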